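(* For every positive integer $n$: $${}_3F_2\left[\begin{matrix}-n,\ \frac{n+1}2,\ \frac n2\\ \frac13,\ \frac23\end{matrix};1\right]=\frac{1+2(-8)^n}{3\cdot4^n},\qquad {}_3F_2\left[\begin{matrix}-n,\ \frac{n+1}2,\ \frac{n+2}2\\ \frac23,\ \frac43\end{matrix};1\right]=\frac{4(-8)^n-1}{3(3n+1)4^n},$$ $${}_3F_2\left[\begin{matrix}-n,\ \frac{n+3}2,\ \frac{n+2}2\\ \frac43,\ \frac53\end{matrix};1\right]=\frac{2(1-(-8)^{n+1})}{9(n+1)(3n+2)4^n},\qquad {}_3F_2\left[\begin{matrix}-n,\ \frac{n+1}2,\ \frac{n+2}2\\ \frac13,\ \frac23\end{matrix};1\right]=\frac{1+2(9n+4)(-8)^n}{9\cdot4^n},$$ $${}_3F_2\left[\begin{matrix}-n,\ \frac{n+3}2,\ \frac{n+2}2\\ \frac23,\ \frac43\end{matrix};1\right]=\frac{4(9n+7)(-8)^n-1}{27(n+1)4^n},\qquad {}_3F_2\left[\begin{matrix}-n,\ \frac{n+4}2,\ \frac{n+3}2\\ \frac43,\ \frac53\end{matrix};1\right]=\frac{2(1-(9n+10)(-8)^{n+1})}{81(n+1)(n+2)4^n}.$$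
   Context: ${}_3F_2\left[\begin{matrix}a_1,a_2,a_3\\ b_1,b_2\end{matrix};x\right]=\sum_{k\ge0}\frac{(a_1)_k(a_2)_k(a_3)_k}{(b_1)_k(b_2)_k}\frac{x^k}{k!}$, $(x)_k=x(x+1)\cdots(x+k-1)$, $(x)_0=1$; with $a_1=-n$ the series is a finite sum. *)

(* Defs.v *)
From mathcomp Require Import all_boot all_order all_algebra.
Set Implicit Arguments. Unset Strict Implicit. Unset Printing Implicit Defensive.
Import Order.TTheory GRing.Theory Num.Theory.
Local Open Scope ring_scope.

Definition poch {R : numFieldType} (x : R) (k : nat) : R :=
  \prod_(i < k) (x + i%:R).

(* Terminating 3F2 with a1 = -n: the series sum_{k>=0} ... has all terms
   with k > n equal to 0 (since (-n)_k = 0), so it equals the finite sum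
   over k = 0..n. *)
Definition F32_term {R : numFieldType} (a1 a2 a3 b1 b2 x : R) (k : nat) : R :=
  poch a1 k * poch a2 k * poch a3 k / (poch b1 k * poch b2 k) * x ^+ k / (k`!)%:R.

Definition F32_terminating {R : numFieldType} (n : nat) (a2 a3 b1 b2 x : R) : R :=
  \sum_(k < n.+1) F32_term (- n%:R) a2 a3 b1 b2 x k.

(* Main.v *)
Require Import Defs.
From mathcomp Require Import all_boot all_order all_algebra.
From mathcomp Require Import ring zify.
Import Order.TTheory GRing.Theory Num.Theory.
Local Open Scope ring_scope.

Lemma pochS {R : numFieldType} (x : R) k : poch x k.+1 = poch x k * (x + k%:R).
Proof. by rewrite /poch big_ord_recr. Qed.

Lemma poch0 {R : numFieldType} (x : R) : poch x 0 = 1.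
Proof. by rewrite /poch big_ord0. Qed.

Lemma poch_neg {R : numFieldType} (n k : nat) : (k <= n)%N ->
  poch (- (n%:R : R)) k * (n - k)`!%:R = (-1) ^+ k * n`!%:R.
Proof.
elim: k => [|k IH] hk; first by rewrite poch0 subn0 expr0 !mul1r.
have hk' : (k <= n)%N by lia.
have e : (n - k)%N = (n - k.+1).+1 by lia.
move: (IH hk'); rewrite e factS natrM pochS exprS => {}IH.
have -> : (- n%:R + k%:R : R) = - ((n - k.+1).+1)%:R by rewrite -e (natrB _ hk') opprB addrC.
rewrite -[RHS]mulrA -IH; ring.
Qed.

Lemma poch_nat {R : numFieldType} (m k : nat) :
  poch ((m.+1)%:R : R) k = (m + k)`!%:R / m`!%:R.
Proof.
have h0 : (m`!%:R : R) != 0 by rewrite pnatr_eq0 -lt0n fact_gt0.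
elim: k => [|k IH]; first by rewrite poch0 addn0 divff.
rewrite pochS IH addnS factS natrM -natrD addSnnS.
field => //.
Qed.

Lemma fact_neq0 {R : numFieldType} n : (n`!%:R : R) != 0.
Proof. by rewrite pnatr_eq0 -lt0n fact_gt0. Qed.

Lemma nz1 {R : numFieldType} n : (1 + n%:R : R) != 0.
Proof. by rewrite addrC natr1 pnatr_eq0. Qed.

Lemma poch_dup {R : numFieldType} (x : R) k :
  poch (x / 2) k * poch ((x + 1) / 2) k = poch x (2 * k) / 4 ^+ k.
Proof.
elim: k => [|k IH]; first by rewrite !poch0 expr0 mulr1 divr1.
rewrite mulnS !pochS.
rewrite [LHS](_ : _ = (poch (x/2) k * poch ((x+1)/2) k) * ((x/2 + k%:R) * ((x+1)/2 + k%:R))); last by ring.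
rewrite IH -[((2*k).+1)%:R]natr1 natrM.
have h4 : (4 : R) ^+ k != 0 by rewrite expf_neq0 // pnatr_eq0.
rewrite exprS. field. exact: h4.
Qed.

Lemma poch_trip {R : numFieldType} (x : R) k :
  poch (x / 3) k * poch ((x + 1) / 3) k * poch ((x + 2) / 3) k = poch x (3 * k) / 27 ^+ k.
Proof.
elim: k => [|k IH]; first by rewrite !poch0 expr0 !mulr1 divr1.
have -> : (3 * k.+1 = (3*k).+3)%N by lia.
rewrite !pochS.
rewrite [LHS](_ : _ = (poch (x/3) k * poch ((x+1)/3) k * poch ((x+2)/3) k) *
   ((x/3 + k%:R) * ((x+1)/3 + k%:R) * ((x+2)/3 + k%:R))); last by ring.
rewrite IH -[((3*k).+2)%:R]natr1 -[((3*k).+1)%:R]natr1 natrM.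
have h : (27 : R) ^+ k != 0 by rewrite expf_neq0 // pnatr_eq0.
rewrite exprS. field. exact: h.
Qed.

Lemma poch1 {R : numFieldType} j : poch (1 : R) j = j`!%:R.
Proof. have := poch_nat (R := R) 0 j. rewrite /= add0n => ->. by rewrite fact0 divr1. Qed.

Lemma poch2 {R : numFieldType} j : poch (2 : R) j = (1 + j)`!%:R.
Proof. have := poch_nat (R := R) 1 j. rewrite /= => ->. by rewrite (_ : 1`! = 1)%N // divr1. Qed.

Lemma poch4 {R : numFieldType} j : poch (4 : R) j = (3 + j)`!%:R / 6.
Proof. have := poch_nat (R := R) 3 j. rewrite /= => ->. by rewrite (_ : 3`! = 6)%N. Qed.

Lemma Lb1 {R : numFieldType} k :
  poch (1/3 : R) k * poch (2/3) k = (3*k)`!%:R / (27^+k * k`!%:R).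
Proof.
have h := poch_trip (1:R) k.
rewrite (_ : ((1:R)+1)/3 = 2/3) in h; last by ring.
rewrite (_ : ((1:R)+2)/3 = 1) in h; last by field.
rewrite !poch1 in h.
rewrite -[LHS](mulfK (fact_neq0 k)) h.
have h27 : (27 : R) ^+ k != 0 by rewrite expf_neq0 // pnatr_eq0.
field. by rewrite h27 fact_neq0.
Qed.

Lemma Lb2 {R : numFieldType} k :
  poch (2/3 : R) k * poch (4/3) k = (1 + 3*k)`!%:R / (27^+k * k`!%:R).
Proof.
have h := poch_trip (2:R) k.
rewrite (_ : ((2:R)+1)/3 = 1) in h; last by field.
rewrite (_ : ((2:R)+2)/3 = 4/3) in h; last by ring.
rewrite mulrAC poch1 poch2 in h.
rewrite -[LHS](mulfK (fact_neq0 k)) h.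
have h27 : (27 : R) ^+ k != 0 by rewrite expf_neq0 // pnatr_eq0.
field. by rewrite h27 fact_neq0.
Qed.

Lemma Lb3 {R : numFieldType} k :
  poch (4/3 : R) k * poch (5/3) k = (3 + 3*k)`!%:R / (6 * 27^+k * (1 + k)`!%:R).
Proof.
have h := poch_trip (4:R) k.
rewrite (_ : ((4:R)+1)/3 = 5/3) in h; last by ring.
rewrite (_ : ((4:R)+2)/3 = 2) in h; last by field.
rewrite poch4 poch2 in h.
rewrite -[LHS](mulfK (fact_neq0 (1 + k))) h.
have h27 : (27 : R) ^+ k != 0 by rewrite expf_neq0 // pnatr_eq0.
field. by rewrite h27 fact_neq0.
Qed.

Lemma La {R : numFieldType} (x a b : R) (m k : nat) :
  x = (m.+1)%:R -> a * 2 = x -> b * 2 = x + 1 ->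
  poch a k * poch b k = (m + 2 * k)`!%:R / (m`!%:R * 4 ^+ k).
Proof.
move=> hx ha hb.
have -> : a = x / 2 by rewrite -ha; field.
have -> : b = (x + 1) / 2 by rewrite -hb; field.
rewrite poch_dup hx poch_nat.
have h4 : (4 : R) ^+ k != 0 by rewrite expf_neq0 // pnatr_eq0.
field. by rewrite h4 fact_neq0.
Qed.

Lemma Lneg {R : numFieldType} (n k : nat) : (k <= n)%N ->
  poch (- (n%:R : R)) k = (-1) ^+ k * n`!%:R / (n - k)`!%:R.
Proof.
move=> hk. by rewrite -(@poch_neg R n k hk) mulfK // fact_neq0.
Qed.

Lemma binR {R : numFieldType} (N J D : nat) : (J <= N)%N -> (N - J)%N = D ->
  ('C(N, J)%:R : R) = N`!%:R / (J`!%:R * D`!%:R).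
Proof.
move=> hJ hD. rewrite -(bin_fact hJ) hD !natrM. field.
by rewrite !fact_neq0.
Qed.

Lemma binR2 {R : numFieldType} (N J D : nat) : (J <= N)%N -> (N - J)%N = D ->
  ('C(N, J.+1)%:R : R) = N`!%:R * D%:R / ((J.+1)`!%:R * D`!%:R).
Proof.
move=> hJ hD. case: (ltngtP J N) hJ => // [hlt|heq] _.
- have hJ1 : (J.+1 <= N)%N by [].
  have e : D = (N - J.+1).+1 by lia.
  rewrite -(bin_fact hJ1) e factS !natrM. field.
  by rewrite !fact_neq0 !nz1.
- have -> : D = 0%N by lia.
  by rewrite bin_small ?heq // mulr0 mul0r.
Qed.

Definition zp {R : numFieldType} (k : nat) : R := (-1)^+k * 27^+k / 4^+k.
Definition u {R : numFieldType} (b m : nat) : R :=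
  \sum_(k < m.+1) zp k * 'C(m + 2*k, 3*k + b)%:R.

Lemma h4 {R : numFieldType} k : (4 : R) ^+ k != 0.
Proof. by rewrite expf_neq0 // pnatr_eq0. Qed.
Lemma h27 {R : numFieldType} k : (27 : R) ^+ k != 0.
Proof. by rewrite expf_neq0 // pnatr_eq0. Qed.

Lemma nz31 {R : numFieldType} k : (1 + 3 * k%:R : R) != 0.
Proof. have: ((3*k).+1)%:R != 0 :> R by rewrite pnatr_eq0. by rewrite -natr1 natrM addrC. Qed.
Lemma nz32 {R : numFieldType} k : (2 + 3 * k%:R : R) != 0.
Proof.
rewrite (_ : (2 + 3 * k%:R : R) = ((3*k).+2)%:R) ?pnatr_eq0 //.
rewrite -[((3*k).+2)%:R]natr1 -[((3*k).+1)%:R]natr1 natrM; ring.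
Qed.

Lemma nz33 {R : numFieldType} k : (3 + 3 * k%:R : R) != 0.
Proof.
rewrite (_ : (3 + 3 * k%:R : R) = ((3*k).+3)%:R) ?pnatr_eq0 //.
rewrite -[((3*k).+3)%:R]natr1 -[((3*k).+2)%:R]natr1 -[((3*k).+1)%:R]natr1 natrM; ring.
Qed.

Lemma nz2 {R : numFieldType} k : (2 + k%:R : R) != 0.
Proof.
rewrite (_ : (2 + k%:R : R) = (k.+2)%:R) ?pnatr_eq0 //.
rewrite -[(k.+2)%:R]natr1 -[(k.+1)%:R]natr1; ring.
Qed.

Lemma nzN1 {R : numFieldType} n : (n%:R + 1 : R) != 0.
Proof. by rewrite addrC nz1. Qed.
Lemma nzN2 {R : numFieldType} n : (n%:R + 2 : R) != 0.
Proof. by rewrite addrC nz2. Qed.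
Lemma nz3N1 {R : numFieldType} n : (3 * n%:R + 1 : R) != 0.
Proof. by rewrite addrC nz31. Qed.
Lemma nz3N2 {R : numFieldType} n : (3 * n%:R + 2 : R) != 0.
Proof. by rewrite addrC nz32. Qed.
Ltac nzs := rewrite ?fact_neq0 ?h4 ?h27 ?nz1 ?nz31 ?nz32 ?nz33 ?nz2 ?nzN1 ?nzN2 ?nz3N1 ?nz3N2 ?pnatr_eq0 //.

Lemma term4 {R : numFieldType} (n k : nat) : (k <= n)%N ->
  F32_term (- (n%:R : R)) ((n%:R+1)/2) ((n%:R+2)/2) (1/3) (2/3) 1 k
  = zp k * 'C(n + 2*k, 3*k + 0)%:R.
Proof.
move=> hk.
rewrite /F32_term -(mulrA (poch _ k)).
rewrite (@La R (n%:R+1) ((n%:R+1)/2) ((n%:R+2)/2) n k); [|by rewrite natr1|by field|by field].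
rewrite Lb1 (@Lneg R n k hk) addn0 (@binR R (n + 2*k) (3*k) (n-k)) ?expr1n /zp; try lia.
field; nzs.
Qed.

Lemma term2 {R : numFieldType} (n k : nat) : (k <= n)%N ->
  (3 * n%:R + 1) * F32_term (- (n%:R : R)) ((n%:R+1)/2) ((n%:R+2)/2) (2/3) (4/3) 1 k
  = zp k * 'C(n + 2*k, 3*k + 0)%:R + 3 * (zp k * 'C(n + 2*k, 3*k + 1)%:R).
Proof.
move=> hk.
rewrite /F32_term -(mulrA (poch _ k)).
rewrite (@La R (n%:R+1) ((n%:R+1)/2) ((n%:R+2)/2) n k); [|by rewrite natr1|by field|by field].
rewrite Lb2 (@Lneg R n k hk) addn0 addn1 (@binR R (n + 2*k) (3*k) (n-k)) ?(@binR2 R (n + 2*k) (3*k) (n-k)) ?expr1n /zp; try lia.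
rewrite add1n factS (natrB _ hk) !natrM.
field; nzs.
Qed.

Lemma La' {R : numFieldType} (x a b : R) (m k : nat) :
  x = (m.+1)%:R -> a * 2 = x -> b * 2 = x + 1 ->
  poch b k * poch a k = (m + 2 * k)`!%:R / (m`!%:R * 4 ^+ k).
Proof. move=> hx ha hb; rewrite mulrC; exact: (@La R x a b m k hx ha hb). Qed.

Lemma term5 {R : numFieldType} (n k : nat) : (k <= n)%N ->
  (n%:R + 1) * F32_term (- (n%:R : R)) ((n%:R+3)/2) ((n%:R+2)/2) (2/3) (4/3) 1 k
  = zp k * 'C(n.+1 + 2*k, 3*k + 1)%:R.
Proof.
move=> hk.
rewrite /F32_term -(mulrA (poch _ k)).
rewrite (@La' R (n%:R+2) ((n%:R+2)/2) ((n%:R+3)/2) n.+1 k); first last.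
- by field.
- by field.
- by rewrite -[(n.+2)%:R]natr1 -[(n.+1)%:R]natr1; ring.
rewrite Lb2 (@Lneg R n k hk) addn1 add1n (@binR R (n.+1 + 2*k) (3*k).+1 (n-k)) ?expr1n /zp; try lia.
rewrite factS natrM.
field; nzs.
Qed.

Lemma term3 {R : numFieldType} (n k : nat) : (k <= n)%N ->
  (n%:R + 1) * (3 * n%:R + 2) / 2 * F32_term (- (n%:R : R)) ((n%:R+3)/2) ((n%:R+2)/2) (4/3) (5/3) 1 k
  = zp k * 'C(n.+1 + 2*k, 3*k + 1)%:R + 3 * (zp k * 'C(n.+1 + 2*k, 3*k + 2)%:R).
Proof.
move=> hk.
rewrite /F32_term -(mulrA (poch _ k)).
rewrite (@La' R (n%:R+2) ((n%:R+2)/2) ((n%:R+3)/2) n.+1 k); first last.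
- by field.
- by field.
- by rewrite -[(n.+2)%:R]natr1 -[(n.+1)%:R]natr1; ring.
rewrite Lb3 (@Lneg R n k hk) addn1 addn2 (@binR R (n.+1 + 2*k) (3*k).+1 (n-k)) ?(@binR2 R (n.+1 + 2*k) (3*k).+1 (n-k)) ?expr1n /zp; try lia.
have -> : (3 + 3*k = (3*k).+3)%N by lia.
rewrite add1n !factS (natrB _ hk) !natrM.
field; nzs.
Qed.

Lemma term6 {R : numFieldType} (n k : nat) : (k <= n)%N ->
  (n%:R + 1) * (n%:R + 2) / 2 * F32_term (- (n%:R : R)) ((n%:R+4)/2) ((n%:R+3)/2) (4/3) (5/3) 1 k
  = zp k * 'C(n.+2 + 2*k, 3*k + 2)%:R.
Proof.
move=> hk.
rewrite /F32_term -(mulrA (poch _ k)).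
rewrite (@La' R (n%:R+3) ((n%:R+3)/2) ((n%:R+4)/2) n.+2 k); first last.
- by field.
- by field.
- by rewrite -[(n.+3)%:R]natr1 -[(n.+2)%:R]natr1 -[(n.+1)%:R]natr1; ring.
rewrite Lb3 (@Lneg R n k hk) addn2 (@binR R (n.+2 + 2*k) (3*k).+2 (n-k)) ?expr1n /zp; try lia.
have -> : (3 + 3*k = (3*k).+3)%N by lia.
rewrite add1n !factS !natrM.
field; nzs.
Qed.

Lemma term1 {R : numFieldType} (m j : nat) : (j <= m)%N ->
  F32_term (- ((m.+1)%:R : R)) (((m.+1)%:R+1)/2) ((m.+1)%:R/2) (1/3) (2/3) 1 j.+1
  = zp j.+1 * 'C(m.+1 + 2*j.+1, 3*j.+1 + 0)%:R - 2/3 * (zp j.+1 * 'C(m.+2 + 2*j, 3*j + 2)%:R).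
Proof.
move=> hj.
have hk : (j.+1 <= m.+1)%N by [].
rewrite /F32_term -(mulrA (poch _ j.+1)).
rewrite (@La' R (m.+1)%:R ((m.+1)%:R/2) (((m.+1)%:R+1)/2) m j.+1); first last.
- by field.
- by field.
- by [].
rewrite Lb1 (@Lneg R m.+1 j.+1 hk) addn0 addn2 (@binR R (m.+1 + 2*j.+1) (3*j.+1) (m-j)) ?(@binR R (m.+2 + 2*j) (3*j).+2 (m-j)) ?expr1n /zp; try lia.
have -> : (m + 2 * j.+1 = (m + 2*j).+2)%N by lia.
have -> : (m.+1 + 2 * j.+1 = (m + 2*j).+3)%N by lia.
have -> : (m.+2 + 2 * j = (m + 2*j).+2)%N by lia.
have -> : (3 * j.+1 = (3*j).+3)%N by lia.
rewrite subSS (factS (m + 2*j).+2) (factS (3*j).+2) (factS j) (factS m) !natrM.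
field; rewrite (fact_neq0 (3*j)); nzs.
Qed.

Lemma sum_ext {R : numFieldType} (F : nat -> R) K1 K2 : (K1 <= K2)%N ->
  (forall k, (K1 <= k)%N -> F k = 0) ->
  \sum_(k < K2) F k = \sum_(k < K1) F k.
Proof.
move=> hK hF.
rewrite -!(big_mkord xpredT) (big_cat_nat (n := K1)) //=.
rewrite [X in _ + X]big_nat_cond [X in _ + X]big1 ?addr0 // => k /andP[/andP[h1 _] _].
exact: hF.
Qed.

Lemma u_ext {R : numFieldType} b m K : (m < K + b)%N ->
  \sum_(k < K) zp k * ('C(m + 2*k, 3*k + b)%:R : R) = u b m.
Proof.
move=> hK.
rewrite /u -(@sum_ext R (fun k => zp k * 'C(m + 2*k, 3*k + b)%:R) K (maxn K m.+1)) ?leq_maxl //.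
  rewrite -(@sum_ext R (fun k => zp k * 'C(m + 2*k, 3*k + b)%:R) m.+1 (maxn K m.+1)) ?leq_maxr //.
  move=> k hk; rewrite bin_small ?mulr0 //; lia.
move=> k hk; rewrite bin_small ?mulr0 //; lia.
Qed.

Lemma D3 (N J : nat) :
  ('C(N.+3, J.+3) + 3 * 'C(N.+1, J.+3) = 3 * 'C(N.+2, J.+3) + 'C(N, J.+3) + 'C(N, J))%N.
Proof. rewrite !binS; lia. Qed.

Lemma D3R {R : numFieldType} (N J : nat) :
  ('C(N.+3, J.+3)%:R - 3 * 'C(N.+2, J.+3)%:R + 3 * 'C(N.+1, J.+3)%:R - 'C(N, J.+3)%:R : R)
  = 'C(N, J)%:R.
Proof.
have h : ('C(N.+3, J.+3)%:R + 3 * 'C(N.+1, J.+3)%:R : R) =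
  3 * 'C(N.+2, J.+3)%:R + 'C(N, J.+3)%:R + 'C(N, J)%:R by rewrite -!natrM -!natrD D3.
rewrite -[RHS](addKr (3 * ('C(N.+2, J.+3)%:R : R) + 'C(N, J.+3)%:R)) -addrA -h; ring.
Qed.

Lemma D3b {R : numFieldType} (N b : nat) : (b <= 2)%N ->
  ('C(N.+3, b)%:R - 3 * 'C(N.+2, b)%:R + 3 * 'C(N.+1, b)%:R - 'C(N, b)%:R : R) = 0.
Proof.
case: b => [|[|[|b]]] // _.
- rewrite !bin0; ring.
- rewrite !bin1 -[(N.+3)%:R]natr1 -[(N.+2)%:R]natr1 -[(N.+1)%:R]natr1; ring.
- rewrite !binS !bin1 !bin0 !natrD; ring.
Qed.

Lemma zpS {R : numFieldType} k : (zp k.+1 : R) = zp 1 * zp k.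
Proof. rewrite /zp !exprS !expr0 !mulr1. field; nzs. Qed.

Lemma rec_u {R : numFieldType} b m : (b <= 2)%N ->
  (u b m.+3 - 3 * u b m.+2 + 3 * u b m.+1 - u b m : R) = zp 1 * u b m.+2.
Proof.
move=> hb.
have e3 : (u b m.+3 : R) = \sum_(k < m.+4) zp k * 'C(m.+3 + 2*k, 3*k+b)%:R by [].
have e2 : (u b m.+2 : R) = \sum_(k < m.+4) zp k * 'C(m.+2 + 2*k, 3*k+b)%:R by rewrite u_ext //; lia.
have e1 : (u b m.+1 : R) = \sum_(k < m.+4) zp k * 'C(m.+1 + 2*k, 3*k+b)%:R by rewrite u_ext //; lia.
have e0 : (u b m : R) = \sum_(k < m.+4) zp k * 'C(m + 2*k, 3*k+b)%:R by rewrite u_ext //; lia.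
rewrite e3 {1}e2 e1 e0 !mulr_sumr -sumrB -big_split -sumrB /=.
rewrite (eq_bigr (fun k : 'I_m.+4 => zp k * ('C(m.+3 + 2*k, 3*k+b)%:R - 3 * 'C(m.+2 + 2*k, 3*k+b)%:R
   + 3 * 'C(m.+1 + 2*k, 3*k+b)%:R - 'C(m + 2*k, 3*k+b)%:R))); last by move=> k _; ring.
rewrite big_ord_recl /= !muln0 !addn0 !add0n D3b // mulr0 add0r.
apply: eq_bigr => j _; rewrite /bump /= ?add1n.
have -> : (m.+3 + 2 * j.+1 = (m.+2 + 2*j).+3)%N by lia.
have -> : (m.+2 + 2 * j.+1 = (m.+2 + 2*j).+2)%N by lia.
have -> : (m.+1 + 2 * j.+1 = (m.+2 + 2*j).+1)%N by lia.
have -> : (m + 2 * j.+1 = (m.+2 + 2*j))%N by lia.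
have -> : (3 * j.+1 + b = (3*j + b).+3)%N by lia.
by rewrite D3R zpS mulrA.
Qed.

Definition cf {R : numFieldType} (A B C : R) (m : nat) : R :=
  A / 4 ^+ m + (B + C * m%:R) * (-2) ^+ m.

Lemma cf_rec {R : numFieldType} (A B C : R) m :
  cf A B C m.+3 - 3 * cf A B C m.+2 + 3 * cf A B C m.+1 - cf A B C m = zp 1 * cf A B C m.+2.
Proof.
rewrite /cf /zp !exprS !expr0 !mulr1 -[(m.+3)%:R]natr1 -[(m.+2)%:R]natr1 -[(m.+1)%:R]natr1.
field; nzs.
Qed.

Lemma uniq3 {R : numFieldType} (c : R) (f g : nat -> R) :
  (forall m, f m.+3 - 3 * f m.+2 + 3 * f m.+1 - f m = c * f m.+2) ->
  (forall m, g m.+3 - 3 * g m.+2 + 3 * g m.+1 - g m = c * g m.+2) ->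
  f 0%N = g 0%N -> f 1%N = g 1%N -> f 2%N = g 2%N -> forall m, f m = g m.
Proof.
move=> Hf Hg h0 h1 h2.
suff H : forall m, [/\ f m = g m, f m.+1 = g m.+1 & f m.+2 = g m.+2] by move=> m; case: (H m).
elim=> [|m [e0 e1 e2]]; first by [].
split => //.
have -> : f m.+3 = c * f m.+2 + 3 * f m.+2 - 3 * f m.+1 + f m by rewrite -(Hf m); ring.
have -> : g m.+3 = c * g m.+2 + 3 * g m.+2 - 3 * g m.+1 + g m by rewrite -(Hg m); ring.
by rewrite e0 e1 e2.
Qed.

Ltac evbin := repeat match goal with |- context[ 'C(?a, ?b) ] =>
  let v := eval vm_compute in 'C(a,b) in
  rewrite (_ : 'C(a,b) = v); last by vm_compute end.

Lemma u0_cf {R : numFieldType} m : (u 0 m : R) = cf (1/9) (8/9) 2 m.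
Proof.
apply: (uniq3 (zp 1)) => {m} [m|m|||].
- exact: rec_u.
- exact: cf_rec.
- rewrite /u /cf !big_ord_recr big_ord0 /= /zp; evbin; field; nzs.
- rewrite /u /cf !big_ord_recr big_ord0 /= /zp; evbin; field; nzs.
- rewrite /u /cf !big_ord_recr big_ord0 /= /zp; evbin; field; nzs.
Qed.

Lemma u1_cf {R : numFieldType} m : (u 1 m : R) = cf (-4/27) (4/27) (-2/3) m.
Proof.
apply: (uniq3 (zp 1)) => {m} [m|m|||].
- exact: rec_u.
- exact: cf_rec.
- rewrite /u /cf !big_ord_recr big_ord0 /= /zp; evbin; field; nzs.
- rewrite /u /cf !big_ord_recr big_ord0 /= /zp; evbin; field; nzs.
- rewrite /u /cf !big_ord_recr big_ord0 /= /zp; evbin; field; nzs.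
Qed.

Lemma u2_cf {R : numFieldType} m : (u 2 m : R) = cf (16/81) (-16/81) (2/9) m.
Proof.
apply: (uniq3 (zp 1)) => {m} [m|m|||].
- exact: rec_u.
- exact: cf_rec.
- rewrite /u /cf !big_ord_recr big_ord0 /= /zp; evbin; field; nzs.
- rewrite /u /cf !big_ord_recr big_ord0 /= /zp; evbin; field; nzs.
- rewrite /u /cf !big_ord_recr big_ord0 /= /zp; evbin; field; nzs.
Qed.

Lemma S4 {R : numFieldType} n :
  F32_terminating n (((n%:R : R)+1)/2) ((n%:R+2)/2) (1/3) (2/3) 1 = u 0 n.
Proof. by apply: eq_bigr => k _; rewrite term4 // -ltnS. Qed.

Lemma S2 {R : numFieldType} n :
  (3 * n%:R + 1) * F32_terminating n (((n%:R : R)+1)/2) ((n%:R+2)/2) (2/3) (4/3) 1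
  = u 0 n + 3 * u 1 n.
Proof.
rewrite /F32_terminating mulr_sumr (eq_bigr _ (fun (k : 'I_n.+1) _ => @term2 R n k (ltn_ord k))).
by rewrite big_split /= -mulr_sumr.
Qed.

Lemma S5 {R : numFieldType} n :
  (n%:R + 1) * F32_terminating n (((n%:R : R)+3)/2) ((n%:R+2)/2) (2/3) (4/3) 1
  = u 1 n.+1.
Proof.
rewrite /F32_terminating mulr_sumr (eq_bigr _ (fun (k : 'I_n.+1) _ => @term5 R n k (ltn_ord k))).
rewrite u_ext //; lia.
Qed.

Lemma S3 {R : numFieldType} n :
  (n%:R + 1) * (3 * n%:R + 2) / 2 * F32_terminating n (((n%:R : R)+3)/2) ((n%:R+2)/2) (4/3) (5/3) 1
  = u 1 n.+1 + 3 * u 2 n.+1.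
Proof.
rewrite /F32_terminating mulr_sumr (eq_bigr _ (fun (k : 'I_n.+1) _ => @term3 R n k (ltn_ord k))).
rewrite big_split /= -mulr_sumr !u_ext //; lia.
Qed.

Lemma S6 {R : numFieldType} n :
  (n%:R + 1) * (n%:R + 2) / 2 * F32_terminating n (((n%:R : R)+4)/2) ((n%:R+3)/2) (4/3) (5/3) 1
  = u 2 n.+2.
Proof.
rewrite /F32_terminating mulr_sumr (eq_bigr _ (fun (k : 'I_n.+1) _ => @term6 R n k (ltn_ord k))).
rewrite u_ext //; lia.
Qed.

Lemma S1 {R : numFieldType} m :
  F32_terminating m.+1 ((((m.+1)%:R : R)+1)/2) ((m.+1)%:R/2) (1/3) (2/3) 1
  = u 0 m.+1 - 2/3 * zp 1 * u 2 m.+2.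
Proof.
rewrite /F32_terminating big_ord_recl (eq_bigr _ (fun (j : 'I_m.+1) _ => @term1 R m j (ltn_ord j))).
rewrite sumrB.
have A : \sum_(j < m.+1) 2/3 * (zp j.+1 * ('C(m.+2 + 2*j, 3*j + 2)%:R : R)) = 2/3 * zp 1 * u 2 m.+2.
  rewrite -(@u_ext R 2 m.+2 m.+1); last lia.
  rewrite !mulr_sumr; apply: eq_bigr => j _; rewrite zpS; ring.
have B : F32_term (- ((m.+1)%:R : R)) (((m.+1)%:R+1)/2) ((m.+1)%:R/2) (1/3) (2/3) 1 0 = 1.
  rewrite /F32_term !poch0 expr0 /= fact0; field; nzs.
have C : (u 0 m.+1 : R) = 1 + \sum_(j < m.+1) zp j.+1 * 'C(m.+1 + 2*j.+1, 3*j.+1 + 0)%:R.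
  by rewrite /u big_ord_recl /zp !expr0 /= !muln0 !addn0 bin0 !mulr1 invr1 mulr1.
rewrite A B C /=. ring.
Qed.

Lemma e8 {R : numFieldType} j : ((-8 : R)) ^+ j = (-2) ^+ j * 4 ^+ j.
Proof. by rewrite -exprMn; congr (_ ^+ _); ring. Qed.

Lemma nz2' {R : numFieldType} : (2 : R) != 0.
Proof. by rewrite pnatr_eq0. Qed.

Lemma P4 {R : numFieldType} n : let N : R := n%:R in
  F32_terminating n ((N + 1) / 2) ((N + 2) / 2) (1 / 3) (2 / 3) 1
        = (1 + 2 * (9 * N + 4) * (-8) ^+ n) / (9 * 4 ^+ n).
Proof. move=> N; rewrite /N S4 u0_cf /cf e8; field; nzs. Qed.

Lemma P2 {R : numFieldType} n : let N : R := n%:R in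
  F32_terminating n ((N + 1) / 2) ((N + 2) / 2) (2 / 3) (4 / 3) 1
        = (4 * (-8) ^+ n - 1) / (3 * (3 * N + 1) * 4 ^+ n).
Proof.
move=> N; rewrite /N; apply: (mulfI (nz3N1 n)).
rewrite S2 u0_cf u1_cf /cf e8; field; nzs.
Qed.

Lemma P5 {R : numFieldType} n : let N : R := n%:R in
  F32_terminating n ((N + 3) / 2) ((N + 2) / 2) (2 / 3) (4 / 3) 1
        = (4 * (9 * N + 7) * (-8) ^+ n - 1) / (27 * (N + 1) * 4 ^+ n).
Proof.
move=> N; rewrite /N; apply: (mulfI (nzN1 n)).
rewrite S5 u1_cf /cf e8 !exprS -[(n.+1)%:R]natr1; field; nzs.
Qed.

Lemma P3 {R : numFieldType} n : let N : R := n%:R in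
  F32_terminating n ((N + 3) / 2) ((N + 2) / 2) (4 / 3) (5 / 3) 1
        = 2 * (1 - (-8) ^+ n.+1) / (9 * (N + 1) * (3 * N + 2) * 4 ^+ n).
Proof.
move=> N; rewrite /N.
have h : ((n%:R + 1) * (3 * n%:R + 2) / 2 : R) != 0.
  by rewrite mulf_neq0 ?invr_neq0 ?nz2' // mulf_neq0 ?nzN1 ?nz3N2.
apply: (mulfI h).
rewrite S3 u1_cf u2_cf /cf !e8 !exprS -[(n.+1)%:R]natr1; field; nzs.
Qed.

Lemma P6 {R : numFieldType} n : let N : R := n%:R in
  F32_terminating n ((N + 4) / 2) ((N + 3) / 2) (4 / 3) (5 / 3) 1
        = 2 * (1 - (9 * N + 10) * (-8) ^+ n.+1) / (81 * (N + 1) * (N + 2) * 4 ^+ n).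
Proof.
move=> N; rewrite /N.
have h : ((n%:R + 1) * (n%:R + 2) / 2 : R) != 0.
  by rewrite mulf_neq0 ?invr_neq0 ?nz2' // mulf_neq0 ?nzN1 ?nzN2.
apply: (mulfI h).
rewrite S6 u2_cf /cf !e8 !exprS -[(n.+2)%:R]natr1 -[(n.+1)%:R]natr1; field; nzs.
Qed.

Lemma P1 {R : numFieldType} n : (0 < n)%N -> let N : R := n%:R in
  F32_terminating n ((N + 1) / 2) (N / 2) (1 / 3) (2 / 3) 1
        = (1 + 2 * (-8) ^+ n) / (3 * 4 ^+ n).
Proof.
case: n => // m _ N; rewrite /N.
rewrite S1 u0_cf u2_cf /cf /zp !e8 !exprS !expr0 -[(m.+2)%:R]natr1 -[(m.+1)%:R]natr1; field; nzs.
Qed.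
Theorem proposition5 (R : numFieldType) (n : nat) (hn : (0 < n)%N) :
  let N : R := n%:R in
  (F32_terminating n ((N + 1) / 2) (N / 2) (1 / 3) (2 / 3) 1
        = (1 + 2 * (-8) ^+ n) / (3 * 4 ^+ n) /\
      F32_terminating n ((N + 1) / 2) ((N + 2) / 2) (2 / 3) (4 / 3) 1
        = (4 * (-8) ^+ n - 1) / (3 * (3 * N + 1) * 4 ^+ n) /\
      F32_terminating n ((N + 3) / 2) ((N + 2) / 2) (4 / 3) (5 / 3) 1
        = 2 * (1 - (-8) ^+ n.+1) / (9 * (N + 1) * (3 * N + 2) * 4 ^+ n) /\
      F32_terminating n ((N + 1) / 2) ((N + 2) / 2) (1 / 3) (2 / 3) 1
        = (1 + 2 * (9 * N + 4) * (-8) ^+ n) / (9 * 4 ^+ n) /\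
      F32_terminating n ((N + 3) / 2) ((N + 2) / 2) (2 / 3) (4 / 3) 1
        = (4 * (9 * N + 7) * (-8) ^+ n - 1) / (27 * (N + 1) * 4 ^+ n) /\
      F32_terminating n ((N + 4) / 2) ((N + 3) / 2) (4 / 3) (5 / 3) 1
        = 2 * (1 - (9 * N + 10) * (-8) ^+ n.+1) / (81 * (N + 1) * (N + 2) * 4 ^+ n)).
Proof.

move=> N; rewrite /N.
split; first exact (@P1 R n hn).
split; first exact (P2 (R := R) n).
split; first exact (P3 (R := R) n).
split; first exact (P4 (R := R) n).
split; first exact (P5 (R := R) n).
exact (P6 (R := R) n).
Qed.
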